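(* Let $m$ be an even positive integer, $q=2^m$, and let $\{u_1,u_2,u_3,u_4\}$ be a $4$-element subset of $U_{q+1}$. Let $M_4$ be the $4\times4$ matrix whose $j$-th column is $(u_j^{-5},u_j^{-3},u_j^{3},u_j^{5})^T$. Then $\mathrm{rank}(M_4)=3$ if and only if $\sigma_{4,2}^2+\sigma_{4,1}\sigma_{4,3}=0$, where $\sigma_{4,\ell}=\sigma_{4,\ell}(u_1,u_2,u_3,u_4)$.
   Context: $U_{q+1}$ denotes the set of $(q+1)$-th roots of unity in $\mathrm{GF}(q^2)$; ranks are over $\mathrm{GF}(q^2)$. $\sigma_{k,\ell}(u_1,\dots,u_k)=\sum_{I\subseteq\{1,\dots,k\},|I|=\ell}\prod_{j\in I}u_j$ is the elementary symmetric polynomial of degree $\ell$ in $k$ variables. *)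

(* Defs.v *)
From mathcomp Require Import all_boot all_order all_algebra all_field.
Set Implicit Arguments. Unset Strict Implicit. Unset Printing Implicit Defensive.
Import GRing.Theory.
Local Open Scope ring_scope.

Definition elsym (F : comNzRingType) (k l : nat) (u : 'I_k -> F) : F :=
  \sum_(I : {set 'I_k} | #|I| == l) \prod_(j in I) u j.

Definition exps : 'I_4 -> int := fun i =>
  match val i with 0 => (-5)%R | 1 => (-3)%R | 2 => 3%R | _ => 5%R end.

Definition M4 (F : fieldType) (u : 'I_4 -> F) : 'M[F]_4 :=
  \matrix_(i < 4, j < 4) (u j) ^ (exps i).

(* Main.v *)
Require Import Defs.
From mathcomp Require Import all_boot all_order all_algebra all_field.
Import GRing.Theory.
Local Open Scope ring_scope.
From mathcomp Require Import ring zify.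
Set Implicit Arguments. Unset Strict Implicit.

Lemma vand (F : fieldType) (x0 x1 x2 x3 a0 a1 a2 a3 : F) :
  x0 != x1 -> x0 != x2 -> x0 != x3 -> x1 != x2 -> x1 != x3 -> x2 != x3 ->
  a0 + a1 * x0 + a2 * x0 ^+ 2 + a3 * x0 ^+ 3 = 0 ->
  a0 + a1 * x1 + a2 * x1 ^+ 2 + a3 * x1 ^+ 3 = 0 ->
  a0 + a1 * x2 + a2 * x2 ^+ 2 + a3 * x2 ^+ 3 = 0 ->
  a0 + a1 * x3 + a2 * x3 ^+ 2 + a3 * x3 ^+ 3 = 0 ->
  [/\ a0 = 0, a1 = 0, a2 = 0 & a3 = 0].
Proof.
move=> d01 d02 d03 d12 d13 d23 P0 P1 P2 P3.
have n01 : x0 - x1 != 0 by rewrite subr_eq0.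
have n02 : x0 - x2 != 0 by rewrite subr_eq0.
have n03 : x0 - x3 != 0 by rewrite subr_eq0.
have n12 : x1 - x2 != 0 by rewrite subr_eq0.
have n13 : x1 - x3 != 0 by rewrite subr_eq0.
have n23 : x2 - x3 != 0 by rewrite subr_eq0.
have E3 : a3 = (a0 + a1 * x0 + a2 * x0 ^+ 2 + a3 * x0 ^+ 3) / ((x0 - x1) * (x0 - x2) * (x0 - x3))
  - (a0 + a1 * x1 + a2 * x1 ^+ 2 + a3 * x1 ^+ 3) / ((x0 - x1) * (x1 - x2) * (x1 - x3))
  + (a0 + a1 * x2 + a2 * x2 ^+ 2 + a3 * x2 ^+ 3) / ((x0 - x2) * (x1 - x2) * (x2 - x3))
  - (a0 + a1 * x3 + a2 * x3 ^+ 2 + a3 * x3 ^+ 3) / ((x0 - x3) * (x1 - x3) * (x2 - x3)).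
  by field; rewrite ?n01 ?n02 ?n03 ?n12 ?n13 ?n23.
rewrite P0 P1 P2 P3 !mul0r subrr add0r subrr in E3.
subst a3.
have E2 : a2 = (a0 + a1 * x0 + a2 * x0 ^+ 2 + 0 * x0 ^+ 3) / ((x0 - x1) * (x0 - x2))
  - (a0 + a1 * x1 + a2 * x1 ^+ 2 + 0 * x1 ^+ 3) / ((x0 - x1) * (x1 - x2))
  + (a0 + a1 * x2 + a2 * x2 ^+ 2 + 0 * x2 ^+ 3) / ((x0 - x2) * (x1 - x2)).
  by field; rewrite ?n01 ?n02 ?n03 ?n12 ?n13 ?n23.
rewrite P0 P1 P2 !mul0r subrr add0r in E2.
subst a2.
have E1 : a1 = (a0 + a1 * x0 + 0 * x0 ^+ 2 + 0 * x0 ^+ 3) / (x0 - x1)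
  - (a0 + a1 * x1 + 0 * x1 ^+ 2 + 0 * x1 ^+ 3) / (x0 - x1).
  by field; rewrite ?n01 ?n02 ?n03 ?n12 ?n13 ?n23.
rewrite P0 P1 !mul0r subrr in E1.
subst a1.
split => //.
by rewrite -P0; ring.
Qed.

Section S.
Variable F : fieldType.
Definition E1 (x0 x1 x2 x3 : F) := x0 + x1 + x2 + x3.
Definition E2 (x0 x1 x2 x3 : F) := x0*x1 + x0*x2 + x0*x3 + x1*x2 + x1*x3 + x2*x3.
Definition E3 (x0 x1 x2 x3 : F) := x0*x1*x2 + x0*x1*x3 + x0*x2*x3 + x1*x2*x3.
Definition E4 (x0 x1 x2 x3 : F) := x0*x1*x2*x3.
Definition Pc (c0 c1 c2 c3 x : F) := c0 + c1 * x + c2 * x ^+ 4 + c3 * x ^+ 5.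

Lemma kerK (x0 x1 x2 x3 c0 c1 c2 c3 : F) :
  x0 != x1 -> x0 != x2 -> x0 != x3 -> x1 != x2 -> x1 != x3 -> x2 != x3 ->
  Pc c0 c1 c2 c3 x0 = 0 -> Pc c0 c1 c2 c3 x1 = 0 ->
  Pc c0 c1 c2 c3 x2 = 0 -> Pc c0 c1 c2 c3 x3 = 0 ->
  let e1 := E1 x0 x1 x2 x3 in let e2 := E2 x0 x1 x2 x3 in
  let e3 := E3 x0 x1 x2 x3 in let e4 := E4 x0 x1 x2 x3 in
  let al := c3 in let be := c2 + c3 * e1 in
  [/\ al * e2 - be * e1 = 0, be * e2 - al * e3 = 0,
      c1 = al * e4 - be * e3 & c0 = be * e4].
Proof.
move=> d01 d02 d03 d12 d13 d23 P0 P1 P2 P3 e1 e2 e3 e4 al be.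
have key : forall x, (c0 - be * e4) + (c1 - (al * e4 - be * e3)) * x
   + (- (be * e2 - al * e3)) * x ^+ 2 + (- (al * e2 - be * e1)) * x ^+ 3
   = Pc c0 c1 c2 c3 x - (al * x + be) * ((x - x0) * (x - x1) * (x - x2) * (x - x3)).
  by move=> x; rewrite /al /be /e1 /e2 /e3 /e4 /E1 /E2 /E3 /E4 /Pc; ring.
have [] := @vand F x0 x1 x2 x3 (c0 - be * e4) (c1 - (al * e4 - be * e3))
   (- (be * e2 - al * e3)) (- (al * e2 - be * e1)) d01 d02 d03 d12 d13 d23.
- by rewrite key P0 subrr !(mul0r, mulr0) subr0.
- by rewrite key P1 subrr !(mul0r, mulr0) subr0.
- by rewrite key P2 subrr !(mul0r, mulr0) subr0.
- by rewrite key P3 subrr !(mul0r, mulr0) subr0.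
move=> /eqP; rewrite subr_eq0 => /eqP h0 /eqP; rewrite subr_eq0 => /eqP h1.
move=> /eqP; rewrite oppr_eq0 => /eqP h2 /eqP; rewrite oppr_eq0 => /eqP h3.
by split.
Qed.

Lemma kerC (x0 x1 x2 x3 al be : F) :
  let e1 := E1 x0 x1 x2 x3 in let e2 := E2 x0 x1 x2 x3 in
  let e3 := E3 x0 x1 x2 x3 in let e4 := E4 x0 x1 x2 x3 in
  al * e2 - be * e1 = 0 -> be * e2 - al * e3 = 0 ->
  forall x, x \in [:: x0; x1; x2; x3] ->
  Pc (be * e4) (al * e4 - be * e3) (be - al * e1) al x = 0.
Proof.
move=> e1 e2 e3 e4 h1 h2 x.
have -> : Pc (be * e4) (al * e4 - be * e3) (be - al * e1) al x =
  (al * x + be) * ((x - x0) * (x - x1) * (x - x2) * (x - x3))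
  - (al * e2 - be * e1) * x ^+ 3 - (be * e2 - al * e3) * x ^+ 2.
  by rewrite /e1 /e2 /e3 /e4 /E1 /E2 /E3 /E4 /Pc; ring.
rewrite h1 h2 !mul0r !subr0 !inE.
by case/or4P => /eqP ->; rewrite subrr !(mul0r, mulr0).
Qed.
End S.

Notation i0 := (@Ordinal 4 0 isT).
Notation i1 := (@Ordinal 4 1 isT).
Notation i2 := (@Ordinal 4 2 isT).
Notation i3 := (@Ordinal 4 3 isT).

Lemma colE4 (F : fieldType) (u : 'I_4 -> F) (v : 'rV_4) j : u j != 0 ->
  (v *m M4 u) 0 j * u j ^+ 5 = Pc (v 0 i0) (v 0 i1) (v 0 i2) (v 0 i3) (u j ^+ 2).
Proof.
move=> uj0.
rewrite !mxE !big_ord_recl big_ord0 !mxE /=.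
have -> : u j ^ (-5) = (u j ^+ 5)^-1 by rewrite -exprnN.
have -> : u j ^ (-3) = (u j ^+ 3)^-1 by rewrite -exprnN.
have -> : lift ord0 ord0 = i1 :> 'I_4 by apply: val_inj.
have -> : lift ord0 (lift ord0 ord0) = i2 :> 'I_4 by apply: val_inj.
have -> : lift ord0 (lift ord0 (lift ord0 ord0)) = i3 :> 'I_4 by apply: val_inj.
have -> : ord0 = i0 :> 'I_4 by apply: val_inj.
by rewrite /Pc -!exprnP; field.
Qed.

Lemma elsymE (F : fieldType) (u : 'I_4 -> F) k : (k <= 4)%N ->
  elsym k u = (-1) ^+ k *
    (\prod_(p <- [:: u i0; u i1; u i2; u i3]) ('X - p%:P))`_(4 - k).
Proof.
move=> hk.
rewrite coef_prod_XsubC /=; last by rewrite leq_subr.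
rewrite subKn // mulrA -exprD -signr_odd oddD addbb /= expr0 mul1r.
rewrite /elsym; apply: eq_big => [I|I _]; first by [].
apply: eq_bigr => i _.
by case: i => [[|[|[|[|n]]]] Hn] //=; congr u; apply: val_inj.
Qed.

Lemma coefs (F : fieldType) (a b c d : F) :
  let P := \prod_(p <- [:: a; b; c; d]) ('X - p%:P) in
  [/\ P`_3 = - (a + b + c + d), P`_2 = a*b + a*c + a*d + b*c + b*d + c*d
    & P`_1 = - (a*b*c + a*b*d + a*c*d + b*c*d)].
Proof.
rewrite /= !big_cons big_nil mulr1.
rewrite !(mulrBl, coefB, coefXM, coefCM) /= !(coefB, coefX, coefC, coefXM, coefCM) /=.
split; ring.
Qed.

Notation j0 := (@Ordinal 3 0 isT).
Notation j1 := (@Ordinal 3 1 isT).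
Notation j2 := (@Ordinal 3 2 isT).

Lemma wA (F : fieldType) (v : 'rV[F]_3) :
  let w := v *m rowsub (widen_ord (leqnSn 3)) 1%:M in
  [/\ w 0 i0 = v 0 j0, w 0 i1 = v 0 j1, w 0 i2 = v 0 j2 & w 0 i3 = 0].
Proof.
rewrite /= !mxE !big_ord_recl !big_ord0 !mxE /=.
have -> : lift ord0 ord0 = j1 :> 'I_3 by apply: val_inj.
have -> : lift ord0 (lift ord0 ord0) = j2 :> 'I_3 by apply: val_inj.
have -> : ord0 = j0 :> 'I_3 by apply: val_inj.
by split; rewrite !(mulr1, mulr0, addr0, add0r).
Qed.

Lemma wB (F : fieldType) (v : 'rV[F]_3) :
  let w := v *m rowsub (lift ord0) 1%:M in
  [/\ w 0 i0 = 0, w 0 i1 = v 0 j0, w 0 i2 = v 0 j1 & w 0 i3 = v 0 j2].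
Proof.
rewrite /= !mxE !big_ord_recl !big_ord0 !mxE /=.
have -> : lift ord0 ord0 = j1 :> 'I_3 by apply: val_inj.
have -> : lift ord0 (lift ord0 ord0) = j2 :> 'I_3 by apply: val_inj.
have -> : ord0 = j0 :> 'I_3 by apply: val_inj.
by split; rewrite !(mulr1, mulr0, addr0, add0r).
Qed.

Lemma ord4_cases (j : 'I_4) : [\/ j = i0, j = i1, j = i2 | j = i3].
Proof.
case: j => [[|[|[|[|n]]]] Hn].
- by apply: Or41; apply: val_inj.
- by apply: Or42; apply: val_inj.
- by apply: Or43; apply: val_inj.
- by apply: Or44; apply: val_inj.
- by [].
Qed.

Lemma ord3_cases (j : 'I_3) : [\/ j = j0, j = j1 | j = j2].
Proof.
case: j => [[|[|[|n]]] Hn].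
- by apply: Or31; apply: val_inj.
- by apply: Or32; apply: val_inj.
- by apply: Or33; apply: val_inj.
- by [].
Qed.

Lemma sq_inj (F : fieldType) (a b : F) : 2%:R = 0 :> F -> a ^+ 2 = b ^+ 2 -> a = b.
Proof.
move=> h2 e; apply/eqP; rewrite -subr_eq0 -sqrf_eq0.
have -> : (a - b) ^+ 2 = a ^+ 2 - b ^+ 2 + 2%:R * (b ^+ 2 - a * b) by ring.
by rewrite e h2 subrr mul0r addr0.
Qed.

Lemma rank_ge3 (F : fieldType) (M : 'M[F]_4) (f : 'I_3 -> 'I_4) :
  (forall v : 'rV_3, (v *m rowsub f 1%:M) *m M = 0 -> v = 0) -> (3 <= \rank M)%N.
Proof.
move=> H.
have rf : row_free (rowsub f M).
  by apply: inj_row_free => v; rewrite rowsubE mulmxA; apply: H.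
have := mxrankM_maxr (rowsub f 1%:M) M.
by rewrite -rowsubE (eqP rf).
Qed.
Unset Implicit Arguments.

Theorem lemma17 (m : nat) (F : finFieldType) (u : 'I_4 -> F) :
  (0 < m)%N -> ~~ odd m ->
  #|F| = ((2 ^ m) ^ 2)%N ->
  injective u ->
  (forall j, u j ^+ (2 ^ m).+1 = 1) ->
  (\rank (M4 u) = 3%N <->
   elsym 2 u ^+ 2 + elsym 1 u * elsym 3 u = 0).
Proof.
move=> m0 _ cardF uinj uq.
have ch2 : (2 \in [pchar F])%N.
  by apply: (@card_finPcharP _ _ (m * 2)%N) => //; rewrite cardF expnM.
have h2 : 2%:R = 0 :> F := pcharf0 ch2.
have nz : forall j, u j != 0.
  move=> j; apply/eqP => h; have := uq j.
  by rewrite h expr0n /= => /esym/eqP; rewrite oner_eq0.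
pose x j := u j ^+ 2.
have dx : forall i j, i != j -> x i != x j.
  move=> i j; apply: contra => /eqP /(sq_inj h2) /uinj ->; exact: eqxx.
have nx : forall j, x j != 0 by move=> j; rewrite /x expf_neq0.
have d01 : x i0 != x i1 by apply: dx.
have d02 : x i0 != x i2 by apply: dx.
have d03 : x i0 != x i3 by apply: dx.
have d12 : x i1 != x i2 by apply: dx.
have d13 : x i1 != x i3 by apply: dx.
have d23 : x i2 != x i3 by apply: dx.
set e1 := E1 (x i0) (x i1) (x i2) (x i3).
set e2 := E2 (x i0) (x i1) (x i2) (x i3).
set e3 := E3 (x i0) (x i1) (x i2) (x i3).
set e4 := E4 (x i0) (x i1) (x i2) (x i3).
have e4nz : e4 != 0 by rewrite /e4 /E4 !mulf_neq0.
have PM : forall (w : 'rV_4) j, w *m M4 u = 0 ->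
    Pc (w 0 i0) (w 0 i1) (w 0 i2) (w 0 i3) (x j) = 0.
  by move=> w j h; rewrite /x -colE4 ?nz // h mxE mul0r.
have KW : forall w : 'rV_4, w *m M4 u = 0 ->
  [/\ w 0 i3 * e2 - (w 0 i2 + w 0 i3 * e1) * e1 = 0,
      (w 0 i2 + w 0 i3 * e1) * e2 - w 0 i3 * e3 = 0,
      w 0 i1 = w 0 i3 * e4 - (w 0 i2 + w 0 i3 * e1) * e3 &
      w 0 i0 = (w 0 i2 + w 0 i3 * e1) * e4].
  by move=> w h; apply: kerK => //; apply: PM.
have hprod : forall y, y ^+ 4 - e1 * y ^+ 3 + e2 * y ^+ 2 - e3 * y + e4
    = (y - x i0) * (y - x i1) * (y - x i2) * (y - x i3).
  by move=> y; rewrite /e1 /e2 /e3 /e4 /E1 /E2 /E3 /E4; ring.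
have noall : ~ [/\ e1 = 0, e2 = 0 & e3 = 0].
  case=> z1 z2 z3.
  have : x i0 ^+ 4 - x i1 ^+ 4 =
    (x i0 ^+ 4 - e1 * x i0 ^+ 3 + e2 * x i0 ^+ 2 - e3 * x i0 + e4)
    - (x i1 ^+ 4 - e1 * x i1 ^+ 3 + e2 * x i1 ^+ 2 - e3 * x i1 + e4)
    + e1 * (x i0 ^+ 3 - x i1 ^+ 3) - e2 * (x i0 ^+ 2 - x i1 ^+ 2)
    + e3 * (x i0 - x i1) by ring.
  rewrite !hprod z1 z2 z3 !subrr !(mul0r, mulr0, subr0, addr0).
  move/eqP; rewrite subr_eq0 => /eqP h4.
  have : (x i0 ^+ 2) ^+ 2 = (x i1 ^+ 2) ^+ 2.
    by transitivity (x i0 ^+ 4); [ring | rewrite h4; ring].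
  by move=> /(sq_inj h2) /(sq_inj h2) /eqP; apply/negP.
have r3 : (3 <= \rank (M4 u))%N.
  have [/andP[/eqP z1 /eqP z2] | nz12] := boolP ((e1 == 0) && (e2 == 0)).
  - have e3nz : e3 != 0 by apply/eqP => z3; apply: noall.
    apply: (@rank_ge3 _ _ (lift ord0)) => v hv.
    have [a0 a1 a2 a3] := wB v.
    have [k1 k2 k3 k4] := KW _ hv.
    move: k1 k2 k3 k4; rewrite a0 a1 a2 a3 z1 z2 => k1 k2 k3 k4.
    rewrite !mulr0 !addr0 in k2 k3 k4; rewrite ?mul0r ?sub0r in k2.
    have v1 : v 0 j1 = 0.
      by apply/eqP; move: k4 => /esym/eqP; rewrite mulf_eq0 (negbTE e4nz) orbF.
    have v2 : v 0 j2 = 0.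
      by apply/eqP; move/eqP: k2; rewrite oppr_eq0 mulf_eq0 (negbTE e3nz) orbF.
    rewrite v1 v2 !mul0r subr0 in k3.
    by apply/rowP => j; rewrite mxE; case: (ord3_cases j) => ->.
  - apply: (@rank_ge3 _ _ (widen_ord (leqnSn 3))) => v hv.
    have [a0 a1 a2 a3] := wA v.
    have [k1 k2 k3 k4] := KW _ hv.
    move: k1 k2 k3 k4; rewrite a0 a1 a2 a3 !mul0r !addr0 sub0r subr0 => k1 k2 k3 k4.
    have v2 : v 0 j2 = 0.
      apply/eqP; move: nz12; rewrite negb_and.
      case/orP => nze.
        by move/eqP: k1; rewrite oppr_eq0 mulf_eq0 (negbTE nze) orbF.
      by move/eqP: k2; rewrite mulf_eq0 (negbTE nze) orbF.
    rewrite v2 !mul0r oppr0 in k3 k4.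
    rewrite addr0 in k3.
    by apply/rowP => j; rewrite mxE; case: (ord3_cases j) => ->.
have hr : \rank (M4 u) = 3%N \/ \rank (M4 u) = 4%N.
  by move: r3 (rank_leq_row (M4 u)); lia.
have rfE : \rank (M4 u) = 3%N <-> ~~ row_free (M4 u).
  rewrite /row_free; split; first by move=> ->.
  by case: hr => // ->.
pose D := e2 ^+ 2 - e1 * e3.
have Dk : ~~ row_free (M4 u) <-> D = 0.
  split.
  - rewrite -kermx_eq0 => /rowV0Pn [w /sub_kermxP hw wnz].
    have [k1 k2 k3 k4] := KW w hw.
    set al := w 0 i3 in k1 k2 k3 k4.
    set be := w 0 i2 + al * e1 in k1 k2 k3 k4.
    have [/andP[/eqP a0 /eqP b0] | nab] := boolP ((al == 0) && (be == 0)).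
      exfalso; move/eqP: wnz; apply; apply/rowP => j; rewrite mxE.
      have w2 : w 0 i2 = be - al * e1 by rewrite /be addrK.
      case: (ord4_cases j) => ->.
      + by rewrite k4 b0 mul0r.
      + by rewrite k3 a0 b0 !mul0r subr0.
      + by rewrite w2 a0 b0 mul0r subr0.
      + exact: a0.
    have hal : al * D = e2 * (al * e2 - be * e1) + e1 * (be * e2 - al * e3).
      by rewrite /D; ring.
    have hbe : be * D = e2 * (be * e2 - al * e3) + e3 * (al * e2 - be * e1).
      by rewrite /D; ring.
    rewrite k1 k2 !mulr0 addr0 in hal hbe.
    move: nab; rewrite negb_and => /orP [] nz0.
      by move/eqP: hal; rewrite mulf_eq0 (negbTE nz0) => /eqP.
    by move/eqP: hbe; rewrite mulf_eq0 (negbTE nz0) => /eqP.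
  - move=> D0.
    have gen : forall al be, al * e2 - be * e1 = 0 -> be * e2 - al * e3 = 0 ->
        (al != 0) || (be != 0) -> ~~ row_free (M4 u).
      move=> al be r1 r2 nab.
      pose w : 'rV[F]_4 := \row_k (match val k with
         | 0 => be * e4 | 1 => al * e4 - be * e3 | 2 => be - al * e1 | _ => al end).
      have w0 : w 0 i0 = be * e4 by rewrite mxE.
      have w1 : w 0 i1 = al * e4 - be * e3 by rewrite mxE.
      have w2 : w 0 i2 = be - al * e1 by rewrite mxE.
      have w3 : w 0 i3 = al by rewrite mxE.
      have hw : w *m M4 u = 0.
        apply/rowP => j; rewrite [RHS]mxE.
        have := colE4 w (nz j); rewrite w0 w1 w2 w3 (kerC r1 r2); last first.
          by rewrite !inE; case: (ord4_cases j) => ->; rewrite eqxx ?orbT.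
        by move/eqP; rewrite mulf_eq0 expf_eq0 (negbTE (nz j)) andbF orbF => /eqP.
      have wnz : w != 0.
        apply/eqP => w00; move: w2 w3; rewrite w00 !mxE => w2 w3.
        move: nab; rewrite -w3 eqxx /=; move: w2; rewrite -w3 mul0r subr0 => <-.
        by rewrite eqxx.
      apply/negP => rfM; move/eqP: hw; rewrite mulmx_free_eq0 //.
      by apply/negP.
    have [/andP[/eqP z1 /eqP z2] | nz12] := boolP ((e1 == 0) && (e2 == 0)).
      have e3nz : e3 != 0 by apply/eqP => z3; apply: noall.
      apply: (gen e2 e3).
      - by move: D0; rewrite /D expr2 [e3 * e1]mulrC.
      - by rewrite mulrC subrr.
      - by rewrite e3nz orbT.
    apply: (gen e1 e2).
    - by rewrite mulrC subrr.
    - by rewrite -expr2.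
    - by rewrite -negb_and.
have [c3 c2 c1] := coefs (u i0) (u i1) (u i2) (u i3).
have el1 : elsym 1 u = u i0 + u i1 + u i2 + u i3.
  by rewrite elsymE //= c3 expr1 mulN1r opprK.
have el2 : elsym 2 u = u i0 * u i1 + u i0 * u i2 + u i0 * u i3 + u i1 * u i2
    + u i1 * u i3 + u i2 * u i3.
  by rewrite elsymE //= c2 sqrrN expr1n mul1r.
have el3 : elsym 3 u = u i0 * u i1 * u i2 + u i0 * u i1 * u i3 + u i0 * u i2 * u i3
    + u i1 * u i2 * u i3.
  by rewrite elsymE //= c1 -signr_odd /= expr1 mulN1r opprK.
have fE1 : e1 = elsym 1 u ^+ 2.
  by rewrite el1 /e1 /E1 /x -!(pFrobenius_autE ch2) !rmorphD.
have fE2 : e2 = elsym 2 u ^+ 2.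
  by rewrite el2 /e2 /E2 /x -!(pFrobenius_autE ch2) !rmorphD !rmorphM.
have fE3 : e3 = elsym 3 u ^+ 2.
  by rewrite el3 /e3 /E3 /x -!(pFrobenius_autE ch2) !rmorphD !rmorphM.
have DE : D = (elsym 2 u ^+ 2 + elsym 1 u * elsym 3 u) ^+ 2.
  rewrite /D fE1 fE2 fE3.
  move: (elsym 1 u) (elsym 2 u) (elsym 3 u) => a b c.
  have -> : (b ^+ 2) ^+ 2 - a ^+ 2 * c ^+ 2 =
    (b ^+ 2 + a * c) ^+ 2 - 2%:R * (a * c * b ^+ 2 + a ^+ 2 * c ^+ 2) by ring.
  by rewrite h2 mul0r subr0.
rewrite rfE Dk DE; split => [/eqP|->]; last by rewrite expr0n.
by rewrite sqrf_eq0 => /eqP.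
Qed.
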